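(* Let $G$ be a graph with at least two edges, $G\ne 2K_2$, and with maximum degree at most $2$. Then, as $n\to\infty$, $$f(n,\mathcal{B}(G))\ge \frac{2^{n-1}}{|E(G)|-1}(1-o(1)).$$
   Context: $2K_2$ is the graph consisting of two disjoint edges. For a graph $G$, a hypergraph $H$ is a Berge-$G$ hypergraph if there are an injective map $\phi:V(G)\to V(H)$ and pairwise distinct hyperedges $e_{xy}\in E(H)$, one for each $xy\in E(G)$, with $\phi(x),\phi(y)\in e_{xy}$. $\mathcal{B}(G)$ denotes the family of all Berge-$G$ hypergraphs. For a positive integer $n$ and a graph $G$, $f(n,\mathcal{B}(G))$ is the smallest number of colors in a coloring of all subsets of $[n]=\{1,\dots,n\}$ (i.e. of $2^{[n]}$) such that there is no monochromatic Berge-$G$ hypergraph, i.e. no color class, viewed as a (non-uniform) hypergraph on $[n]$, contains a Berge-$G$ subhypergraph. *)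

(* Defs.v *)
From HB Require Import structures.
From mathcomp Require Import all_boot all_order all_algebra.
Set Implicit Arguments. Unset Strict Implicit. Unset Printing Implicit Defensive.

(* A finite simple graph: vertex type V : finType, adjacency e : rel V,
   assumed symmetric and irreflexive (hypotheses of the theorem). *)

Definition edges (V : finType) (e : rel V) : {set {set V}} :=
  [set [set x; y] | x in V, y in V & e x y].

Definition max_deg_le (V : finType) (e : rel V) (d : nat) : Prop :=
  forall x : V, #|[set y | e x y]| <= d.

Definition twoK2 : rel 'I_4 :=
  fun a b => [|| ((a : nat) == 0) && ((b : nat) == 1),
                 ((a : nat) == 1) && ((b : nat) == 0),
                 ((a : nat) == 2) && ((b : nat) == 3) |
                 ((a : nat) == 3) && ((b : nat) == 2)].

Definition graph_iso (V W : finType) (e : rel V) (e' : rel W) : Prop :=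
  exists f : V -> W, bijective f /\ forall x y, e' (f x) (f y) = e x y.

(* The hypergraph (family of subsets of [n] = 'I_n) given by the color class
   [set A | c A == i] contains a Berge-G subhypergraph: an injective vertex
   map phi and pairwise distinct hyperedges psi(xy) of that color, one per edge
   xy of G, with phi x, phi y in psi(xy). *)
Definition has_mono_berge (V : finType) (e : rel V) (n k : nat)
    (c : {set 'I_n} -> 'I_k) : Prop :=
  exists (i : 'I_k) (phi : V -> 'I_n) (psi : {set V} -> {set 'I_n}),
    injective phi /\
    {in edges e &, injective psi} /\
    (forall x y, e x y ->
       [/\ phi x \in psi [set x; y], phi y \in psi [set x; y]
         & c (psi [set x; y]) = i]).

(* A k-coloring of 2^[n] with no monochromatic Berge-G. f(n, B(G)) is the
   least k for which such a coloring exists. *)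
Definition berge_free_coloring (V : finType) (e : rel V) (n k : nat)
    (c : {set 'I_n} -> 'I_k) : Prop :=
  ~ has_mono_berge e c.

(* Main.v *)
Require Import Defs.
From HB Require Import structures.
From mathcomp Require Import all_boot all_order all_algebra.
From mathcomp Require Import zify ring lra.
Set Implicit Arguments. Unset Strict Implicit. Unset Printing Implicit Defensive.

Lemma sdr_seq (V T : finType) (P : V -> {set T}) (t0 : T) (s : seq V) :
  uniq s -> (forall x, size s <= #|P x|) ->
  exists f : V -> T, {in s &, injective f} /\ {in s, forall x, f x \in P x}.
Proof.
elim: s => [|x s IH] /=.
  by move=> _ _; exists (fun _ => t0); split.
case/andP=> xs us hP.
have [f [fi fP]] := IH us (fun z => ltnW (hP z)).
set B := [set f z | z in [set z in s]].
have hB : #|B| <= size s.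
  apply: leq_trans (leq_imset_card _ _) _.
  by rewrite cardsE card_size.
have : 0 < #|P x :\: B|.
  rewrite cardsD; have := hP x; have := subset_leq_card (subsetIr (P x) B).
  lia.
case/card_gt0P=> y; rewrite inE => /andP[yB yP].
exists (fun z => if z == x then y else f z); split.
  move=> a b; rewrite !inE => /orP[/eqP->|ha] /orP[/eqP->|hb] //=; rewrite ?eqxx.
  - case: eqP => [->//|_] eq1; case/negP: yB; rewrite eq1.
    by apply/imsetP; exists b; rewrite ?inE.
  - case: eqP => [ax|_]; first by move: xs; rewrite -ax ha.
    move=> eq1; case/negP: yB; rewrite -eq1.
    by apply/imsetP; exists a; rewrite ?inE.
  - case: eqP => [ax|_]; first by move: xs; rewrite -ax ha.
    case: eqP => [bx|_]; first by move: xs; rewrite -bx hb.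
    exact: fi.
move=> z; rewrite inE => /orP[/eqP->|hz]; first by rewrite eqxx.
case: eqP => [->//|_]; exact: fP.
Qed.

Lemma sdr (V T : finType) (P : V -> {set T}) (t0 : T) :
  (forall x, #|V| <= #|P x|) ->
  exists f : V -> T, injective f /\ forall x, f x \in P x.
Proof.
move=> hP.
have [|f [fi fP]] := @sdr_seq V T P t0 (enum V) (enum_uniq _).
  by move=> x; rewrite -cardE.
exists f; split; last by move=> x; apply: fP; rewrite mem_enum.
by move=> a b; apply: fi; rewrite mem_enum.
Qed.

Lemma central_step r : r.+1 * 'C(r.+1.*2, r.+1) = 2 * r.*2.+1 * 'C(r.*2, r).
Proof.
have h1 := mul_bin_diag r.+1.*2 r.
have h2 := mul_bin_diag r.*2.+1 r.
have h3 : 'C(r.*2.+1, r.+1) = 'C(r.*2.+1, r).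
  by rewrite -bin_sub; [congr 'C(_,_); lia | lia].
rewrite doubleS /= in h1; rewrite /= h3 in h2.
have : r.+1 * (r.+1 * 'C(r.+1.*2, r.+1)) = r.+1 * (2 * r.*2.+1 * 'C(r.*2, r)).
  rewrite doubleS /= in h1 *. rewrite -h1. rewrite -(mulnA 2) h2 !mulnA; congr (_ * _); lia.
by move/eqP; rewrite eqn_pmul2l // => /eqP.
Qed.

Lemma central_bound r : 'C(r.*2, r)^2 * (3*r+1) <= 16^r.
Proof.
elim: r => [|r IH]; first by [].
have h := central_step r.
set x := 'C(r.*2, r) in IH h *; set y := 'C(r.+1.*2, r.+1) in h *.
have H : (r.+1)^2 * (y^2 * (3 * r.+1 + 1)) <= (r.+1)^2 * (16 * 16 ^ r).
  have e : (r.+1)^2 * (y^2 * (3 * r.+1 + 1)) = 4 * (r.*2.+1)^2 * (3*r+4) * x^2.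
    rewrite -mulnA [_ * (_ * _)]mulnA -expnMn h; lia.
  rewrite e.
  have : 4 * (r.*2.+1)^2 * (3*r+4) <= 16 * (r.+1)^2 * (3*r+1) by nia.
  move=> h4; apply: leq_trans (leq_mul h4 (leqnn (x^2))) _.
  have h5 := leq_mul (leqnn (16 * (r.+1)^2)) IH.
  have -> : 16 * r.+1 ^ 2 * (3 * r + 1) * x ^ 2 = 16 * r.+1 ^ 2 * (x ^ 2 * (3 * r + 1)) by ring.
  have -> : r.+1 ^ 2 * (16 * 16 ^ r) = 16 * r.+1 ^ 2 * 16 ^ r by ring.
  exact: h5.
by rewrite (expnS 16); rewrite leq_pmul2l ?expn_gt0 in H.
Qed.

Lemma bin_sq n j : 'C(n,j)^2 <= 'C(n.*2, n).
Proof.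
case: (leqP j n) => hj; last by rewrite bin_small.
rewrite -addnn -binomial.Vandermonde (bigD1 (Ordinal (hj : j < n.+1))) //=.
by rewrite bin_sub // -mulnn leq_addr.
Qed.

Lemma bin_bound n j : 'C(n,j)^4 * (3*n+1) <= (2^n)^4.
Proof.
have h1 := bin_sq n j; have h2 := central_bound n.
have e : (2^n)^4 = 16^n by rewrite -expnM mulnC expnM.
rewrite e; apply: leq_trans h2; apply: leq_mul => //.
have -> : 'C(n,j)^4 = ('C(n,j)^2)^2 by rewrite -expnM.
by rewrite leq_exp2r.
Qed.

Lemma card_bigcup_le (T I : finType) (P : pred I) (F : I -> {set T}) :
  #|\bigcup_(i | P i) F i| <= \sum_(i | P i) #|F i|.
Proof.
elim/big_rec2: _ => [|i n U _ h]; first by rewrite cards0.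
apply: leq_trans (leq_card_setU _ _) _.
by rewrite leq_add2l.
Qed.

Lemma count_F n s :
  2^n <= 2 * #|[set A : {set 'I_n} | 2 * #|~: A| + s <= n]|
         + \sum_(i < s) 'C(n, (n+1-s) %/ 2 + i).
Proof.
set F := [set A : {set 'I_n} | _].
set L := [set A : {set 'I_n} | 2 * #|A| + s <= n].
set a := (n+1-s) %/ 2.
set M := \bigcup_(i < s) [set A : {set 'I_n} | #|A| == a + i].
have cC (A : {set 'I_n}) : #|~: A| = n - #|A|.
  by have := cardsC A; rewrite card_ord; lia.
have hL : #|L| <= #|F|.
  rewrite -(card_imset L (@setC_inj _)); apply: subset_leq_card.
  apply/subsetP=> B /imsetP[A]; rewrite !inE => hA ->; by rewrite setCK.
have hM : #|M| <= \sum_(i < s) 'C(n, a + i).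
  apply: leq_trans (card_bigcup_le _ _) _.
  by apply: leq_sum => i _; rewrite card_draws card_ord.
have hT : [set: {set 'I_n}] \subset F :|: L :|: M.
  apply/subsetP=> A _; rewrite !inE cC.
  case: (leqP (2 * (n - #|A|) + s) n) => //= h1.
  case: (leqP (2 * #|A| + s) n) => //= h2.
  have hA : #|A| <= n by rewrite -[X in _ <= X](card_ord n) max_card.
  have ea := divn_eq (n+1-s) 2; have ma : (n+1-s) %% 2 < 2 by rewrite ltn_pmod.
  rewrite -/a in ea; move: ea ma; set r := _ %% 2 => ea ma; clearbody a r.
  have hi : #|A| - a < s.
    move: h1 h2 hA; set x := #|A|; move: x => x h1 h2 hA; clear -h1 h2 hA ea ma; lia.
  apply/bigcupP; exists (Ordinal hi) => //; rewrite inE /=; apply/eqP; lia.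
have := subset_leq_card hT; rewrite -powersetT card_powerset cardsT card_ord => h.
apply: leq_trans h _.
apply: leq_trans (leq_card_setU _ _) _.
have h3 : #|F :|: L| <= #|F| + #|L| by apply: (leq_card_setU F L). apply: leq_add hM; rewrite mul2n -addnn; apply: leq_trans h3 _; by rewrite leq_add2l.
Qed.

Lemma edgesP (V : finType) (e : rel V) x y : e x y -> [set x; y] \in edges e.
Proof. by move=> h; apply/imset2P; exists x y; rewrite ?inE. Qed.

Lemma bigcap_card (V : finType) (e : rel V) (maxdeg : max_deg_le e 2) n
   (Q : V -> {set 'I_n}) x (hn : #|V| <= n) :
  (forall y, e x y -> 2 * #|~: Q y| + #|V| <= n) ->
  #|V| <= #|\bigcap_(y | e x y) Q y|.
Proof.
move=> hQ.
have hs : \sum_(y | e x y) #|~: Q y| * 2 <= \sum_(y | e x y) (n - #|V|).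
  by apply: leq_sum => y /hQ; lia.
have e1 : \sum_(y | e x y) (n - #|V|) = #|[set y | e x y]| * (n-#|V|).
  by rewrite -sum_nat_const; apply: eq_bigl => y; rewrite inE.
rewrite e1 -big_distrl /= in hs.
have hd := leq_mul (maxdeg x) (leqnn (n - #|V|)).
have hc := card_bigcup_le (fun y => e x y) (fun y => ~: Q y).
rewrite -setC_bigcap in hc.
have := cardsC (\bigcap_(y | e x y) Q y); rewrite card_ord.
move: hs hc hd; rewrite -/(#|[set y | e x y]|); set t := \sum_(_ | _) _; set u := #|[set y | e x y]|.
set w := #|~: _|; set z := #|\bigcap_(_ | _) _|.
clearbody t u w z. set p := u * _. clearbody p. lia.
Qed.



Lemma class_bound (V : finType) (e : rel V) (e_sym : symmetric e)
  (maxdeg : max_deg_le e 2) n k (c : {set 'I_n} -> 'I_k)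
  (hfree : berge_free_coloring e c) (i : 'I_k) (hn : #|V| <= n) (n0 : 0 < n) :
  #|[set A : {set 'I_n} | (2 * #|~: A| + #|V| <= n) && (c A == i)]| < #|edges e|.
Proof.
set Fi := [set A : {set 'I_n} | _].
rewrite ltnNge; apply/negP => hm; apply: hfree.
set E := enum (edges e); set S := enum Fi.
pose psi X := nth set0 S (index X E).
have hE X : X \in edges e -> index X E < size S.
  move=> hX; rewrite /S -cardE; apply: leq_trans hm.
  by rewrite cardE -/E index_mem /E mem_enum.
have psiF X : X \in edges e -> psi X \in Fi.
  by move=> hX; rewrite -mem_enum; apply: mem_nth; apply: hE.
have psi_inj : {in edges e &, injective psi}.
  move=> X Y hX hY; rewrite /psi => /eqP; rewrite nth_uniq ?hE ?enum_uniq //.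
  move/eqP=> h; rewrite -(nth_index set0 (_ : X \in E)) ?mem_enum //.
  by rewrite h nth_index ?mem_enum.
pose P x := \bigcap_(y | e x y) psi [set x; y].
have hP x : #|V| <= #|P x|.
  apply: bigcap_card => // y hxy.
  by have := psiF _ (edgesP hxy); rewrite inE => /andP[].
have [phi [phi_inj phiP]] := sdr (Ordinal n0) hP.
exists i, phi, psi; split => //; split => // x y hxy.
have hx : phi x \in psi [set x; y].
  have hxP := phiP x; rewrite /P in hxP.
  have hsub := @bigcap_inf _ _ y (e x) (fun z => psi [set x; z]) hxy. exact: (subsetP hsub).

have hy : phi y \in psi [set x; y].
  have -> : [set x; y] = [set y; x] by rewrite setUC.
  have hyP := phiP y; rewrite /P in hyP.
  have hyx : e y x by rewrite e_sym.
  have hsub := @bigcap_inf _ _ x (e y) (fun z => psi [set y; z]) hyx. exact: (subsetP hsub).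
have := psiF _ (edgesP hxy); rewrite inE => /andP[_ /eqP ->]; split => //.
Qed.

Import Order.TTheory GRing.Theory Num.Theory.
Local Open Scope ring_scope.

Lemma epsq (eps : rat) : 0 < eps -> exists q : nat, (0 < q)%N /\ 1 <= eps * q%:R.
Proof.
move=> he; have [d hd] := denqP eps; exists d.+1; split => //.
have e1 : eps * (denq eps)%:~R = (numq eps)%:~R.
  by rewrite -{1}(divq_num_den eps) mulfVK // intr_eq0 denq_neq0.
rewrite hd in e1; rewrite -pmulrn /= in e1.
have : (0 < numq eps)%R by rewrite numq_gt0.
move=> h; rewrite e1.
have h1 : (1 <= numq eps)%R by [].
by rewrite ler1z.
Qed.

Lemma final (eps : rat) (P Fc Sm k m q : nat) : 0 < eps -> 1 <= eps * q%:R -> (2 <= m)%N ->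
  (2 * P <= 2 * Fc + Sm)%N -> (Sm * q <= 2 * P)%N -> (Fc <= k * (m - 1))%N ->
  (1 - eps) * (P%:R / (m%:R - 1)) <= (k%:R : rat).
Proof.
move=> he heq hm h1 h2 h3.
have hm1 : (0 : rat) < m%:R - 1.
  have : (1 : rat) < m%:R by rewrite ltr1n.
  lra.
rewrite mulrA ler_pdivrMr //.
have r1 : 2 * (P%:R : rat) <= 2 * Fc%:R + Sm%:R.
  have := h1; rewrite -(ler_nat rat). rewrite natrD !natrM. done.
have r2 : (Sm%:R : rat) * q%:R <= 2 * P%:R.
  by have := h2; rewrite -(ler_nat rat) !natrM.
have r3 : (Fc%:R : rat) <= k%:R * (m%:R - 1).
  by have := h3; rewrite -(ler_nat rat) natrM natrB ?(ltnW hm).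
have r4 : (Sm%:R : rat) <= Sm%:R * (eps * q%:R).
  by rewrite ler_peMr ?ler0n.
have r5 : eps * (Sm%:R * q%:R) <= eps * (2 * P%:R).
  by rewrite ler_pM2l.
nra.
Qed.

Unset Implicit Arguments.

Theorem theorem3 (V : finType) (e : rel V)
  (e_sym : symmetric e) (e_irr : irreflexive e)
  (two_edges : (2 <= #|edges e|)%N)
  (not_2K2 : ~ graph_iso e twoK2)
  (maxdeg : max_deg_le e 2) :
  forall eps : rat, 0 < eps ->
  exists N : nat, forall n : nat, (N <= n)%N ->
    forall (k : nat) (c : {set 'I_n} -> 'I_k),
      berge_free_coloring e c ->
      (1 - eps) * ((2 ^ n.-1)%N%:R / ((#|edges e|)%:R - 1)) <= (k%:R : rat).
Proof.
move=> eps he.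
have [q [q0 hq]] := epsq he.
exists ((#|V| * q) ^ 4 + #|V| + 1)%N => n hN k c hfree.
have hn : (#|V| <= n)%N by lia.
have n0 : (0 < n)%N by lia.
have h3n : ((#|V| * q) ^ 4 <= 3 * n + 1)%N by lia.
set F := [set A : {set 'I_n} | (2 * #|~: A| + #|V| <= n)%N].
set Sm := (\sum_(i < #|V|) 'C(n, (n + 1 - #|V|) %/ 2 + i))%N.
have hc : (2 ^ n <= 2 * #|F| + Sm)%N by apply: count_F.
have hS : (Sm * q <= 2 ^ n)%N.
  have ht j : ('C(n, j) * (#|V| * q) <= 2 ^ n)%N.
    rewrite -(@leq_exp2r _ _ 4) // expnMn.
    apply: leq_trans (bin_bound n j).
    by rewrite leq_mul2l h3n orbT.
  have hs : (Sm * (#|V| * q) <= #|V| * 2 ^ n)%N.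
    rewrite /Sm big_distrl /=.
    apply: (@leq_trans (\sum_(i < #|V|) 2 ^ n)); first by apply: leq_sum => i _; apply: ht.
    by rewrite sum_nat_const card_ord.
  case: (posnP #|V|) => hV.
    by rewrite /Sm hV big_ord0.
  by rewrite mulnCA leq_pmul2l in hs.
have hF : (#|F| <= k * (#|edges e| - 1))%N.
  have sub : F \subset \bigcup_(i < k) [set A : {set 'I_n} | ((2 * #|~: A| + #|V| <= n)%N && (c A == i))].
    apply/subsetP=> A; rewrite inE => hA; apply/bigcupP; exists (c A) => //.
    by rewrite inE hA eqxx.
  apply: leq_trans (subset_leq_card sub) _.
  apply: leq_trans (card_bigcup_le _ _) _.
  rewrite -[k in (_ <= k * _)%N]card_ord -sum_nat_const.
  apply: leq_sum => i _.
  have := class_bound e_sym maxdeg hfree i hn n0; lia.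
have e2 : (2 ^ n = 2 * 2 ^ n.-1)%N by rewrite -expnS prednK.
rewrite e2 in hc hS.
exact: (final he hq two_edges hc hS hF).
Qed.
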